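(* Fix $\gamma\in(0,1]$, $0<\alpha<0.25$, $r\in\mathbb N$, $\epsilon>0$, and let $\xi>0$ be arbitrarily small. There exist $C>0$ and $N_0$ such that for all $N\ge N_0$ and all $s\in\mathcal S$ with $\|s-s^*\|^{2r}\le N^{-\epsilon}$, $$\Big|[J^{T}(s^* )]^{-1}(s-s^* )\cdot\big\langle s-s^*,\nabla^2 f(s^* )(s-s^* )\big\rangle\Big|\le \frac{C}{N^{\frac{3\epsilon}{2r}-2\alpha-3\xi}}.$$
   Context: Let $N\ge1$, $\lambda=1-\gamma/N^\alpha$, and $b=b(N)\ge1$ an integer with $b=O(\log N)$. $\mathcal S=\{s\in\mathbb R^b:1\ge s_1\ge\cdots\ge s_b\ge0\}$. The mean-field vector field is $f_k(s)=\lambda(s_{k-1}^2-s_k^2)-(s_k-s_{k+1})$, $k=1,\dots,b$, with $s_0=1,s_{b+1}=0$; $s^*$ is its unique equilibrium in $\mathcal S$. $J(s^* )$ is the $b\times b$ tridiagonal Jacobian of $f$ at $s^*$ with $J_{kk}=-2\lambda s^*_k-1$, $J_{k,k+1}=1$, $J_{k+1,k}=2\lambda s^*_k$. For $x\in\mathbb R^b$, $\langle x,\nabla^2f(s^* )x\rangle$ denotes the vector in $\mathbb R^b$ whose $i$-th entry is $x^T\nabla^2 f_i(s^* )x$, where $\nabla^2f_i$ is the Hessian of $f_i$ (its only nonzero entries are $(i,i)$ equal to $-2\lambda$ and $(i-1,i-1)$ equal to $2\lambda$). ''$\cdot$'' is the Euclidean inner product and $\|\cdot\|$ the Euclidean norm.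 *)

(* Defs.v *)
From HB Require Import structures.
From mathcomp Require Import all_boot all_order all_algebra.
From mathcomp Require Import all_classical all_reals all_analysis.
Set Implicit Arguments. Unset Strict Implicit. Unset Printing Implicit Defensive.
Import Order.TTheory GRing.Theory Num.Theory.
Local Open Scope ring_scope.

(* Vectors s in R^b are column vectors 'cV[R]_b; paper index k (1..b)
   corresponds to the ordinal k-1. *)

Section Defs.
Variable R : realType.

(* s_k for k : nat with the boundary conventions s_0 = 1, s_{b+1} = 0
   (and 0 beyond). *)
Definition sk (b : nat) (s : 'cV[R]_b) (k : nat) : R :=
  match k with
  | 0%N => 1
  | k'.+1 => match (insub k' : option 'I_b) with Some i => s i 0 | None => 0 end
  end.

Definition inS (b : nat) (s : 'cV[R]_b) : Prop :=
  (forall i : 'I_b, 0 <= s i 0 /\ s i 0 <= 1) /\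
  (forall i j : 'I_b, (i <= j)%N -> s j 0 <= s i 0).

Definition fvec (lam : R) (b : nat) (s : 'cV[R]_b) : 'cV[R]_b :=
  \col_(i < b) (lam * (sk s i ^+ 2 - sk s i.+1 ^+ 2) - (sk s i.+1 - sk s i.+2)).

Definition Jac (lam : R) (b : nat) (s : 'cV[R]_b) : 'M[R]_b :=
  \matrix_(i < b, j < b)
    if i == j then - 2 * lam * s i 0 - 1
    else if j == i.+1 :> nat then 1
    else if i == j.+1 :> nat then 2 * lam * s j 0
    else 0.

(* Hessian of f_i (paper index i+1): entries (i,i) = -2 lam,
   (i-1,i-1) = 2 lam (when i-1 is an index), others 0. *)
Definition hessf (lam : R) (b : nat) (i : 'I_b) : 'M[R]_b :=
  \matrix_(j < b, k < b)
    if j == k then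
      (if j == i then - 2 * lam else if j.+1 == i :> nat then 2 * lam else 0)
    else 0.

Definition hessq (lam : R) (b : nat) (x : 'cV[R]_b) : 'cV[R]_b :=
  \col_(i < b) ((x^T *m hessf lam i *m x) 0 0).

Definition dotv (b : nat) (u v : 'cV[R]_b) : R := \sum_(i < b) u i 0 * v i 0.

Definition enorm (b : nat) (u : 'cV[R]_b) : R := Num.sqrt (dotv u u).

End Defs.

(* Main.v *)
Require Import Defs.
From HB Require Import structures.
From mathcomp Require Import all_boot all_order all_algebra.
From mathcomp Require Import all_classical all_reals all_analysis.
From mathcomp Require Import zify ring lra.
Import Order.TTheory GRing.Theory Num.Theory.
Local Open Scope ring_scope.

Section Aux.
Variable R : realType.

Lemma sk_ord n (v : 'cV[R]_n) (i : 'I_n) : sk v i.+1 = v i 0.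
Proof.
rewrite /sk; case: insubP => [j hk hj|]; last by rewrite /= ltn_ord.
by congr (v _ 0); apply/val_inj.
Qed.

Lemma sk_out n (v : 'cV[R]_n) k : (n <= k)%N -> sk v k.+1 = 0.
Proof.
move=> h; rewrite /sk; case: insubP => [j hk hj|] //=.
by move: hk; rewrite /= ltnNge h.
Qed.

Arguments sk : simpl never.
Arguments sk_ord {n}. Arguments sk_out {n}.
Definition Zx n (v : 'cV[R]_n) k := match k with 0 => 0 | _ => sk v k end.
Arguments Zx {n}.

Lemma sum_ind n k (F : nat -> R) :
  \sum_(j < n) (if (j:nat) == k then F j else 0) = if (k < n)%N then F k else 0.
Proof.
case: ifP => hk.
- rewrite (bigD1 (Ordinal hk)) //= eqxx big1 ?addr0 // => j hj.
  case: eqP => // hjk; move: hj; by rewrite -val_eqE /= hjk eqxx.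
- rewrite big1 // => j _; case: eqP => // hjk; move: hk; by rewrite -hjk ltn_ord.
Qed.

Lemma Jac_row lam n (s z : 'cV[R]_n) (i : 'I_n) :
  (Jac lam s *m z) i 0 = (2*lam*sk s i) * Zx z i
     - (2*lam*sk s i.+1 + 1) * Zx z i.+1 + Zx z i.+2.
Proof.
rewrite mxE.
have E : forall j : 'I_n, Jac lam s i j * z j 0 =
   (if (j:nat) == i then (-(2*lam*sk s i.+1) - 1) * sk z i.+1 else 0)
 + (if (j:nat) == i.+1 then sk z j.+1 else 0)
 + (if (j:nat) == i.-1 then (if (0 < i)%N then 2*lam*sk s j.+1 * sk z j.+1 else 0) else 0).
  move=> j; rewrite !mxE !sk_ord -val_eqE (eq_sym (val j) (val i)).
  case: (boolP (val i == val j)) => h1.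
    rewrite -(val_inj (eqP h1)).
    have -> : (val i == (val i).+1) = false by lia.
    case: (boolP (val i == (val i).-1)) => h4 /=; last by rewrite !addr0; ring.
    have -> : (0 < val i)%N = false by lia.
    by rewrite !addr0; ring.
  case: (boolP (val j == (val i).+1)) => h2 /=.
    have -> : (val j == (val i).-1) = false by lia.
    by rewrite mul1r add0r addr0.
  case: (boolP (val i == (val j).+1)) => h3 /=.
    have -> : (val j == (val i).-1) = true by lia.
    have -> : (0 < val i)%N = true by lia.
    by rewrite !add0r.
  case: (boolP (val j == (val i).-1)) => h4 /=; last by rewrite mul0r !addr0.
  have -> : (0 < val i)%N = false by lia.
  by rewrite mul0r !addr0.
rewrite (eq_bigr _ (fun j _ => E j)) !big_split /=.
rewrite (sum_ind n i (fun _ => (-(2*lam*sk s i.+1) - 1) * sk z i.+1)).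
rewrite (sum_ind n i.+1 (fun j => sk z j.+1)).
rewrite (sum_ind n i.-1 (fun j => if (0 < i)%N then 2*lam*sk s j.+1 * sk z j.+1 else 0)).
rewrite ltn_ord /=.
have hi := ltn_ord i.
case: (ltnP i.+1 n) => h; last rewrite (sk_out z _ h).
  all: move: hi h; case: (nat_of_ord i) => [|i'] /= hi h; rewrite ?(ltnW hi) ?if_same /=; ring.
Qed.



Fixpoint recf (a f : nat -> R) k := match k with 0 => 0 | k'.+1 => a k' * recf a f k' + f k' end.

Section Solve.
Variables (lam : R) (n : nat) (s : 'cV[R]_n).
Definition aa k := 2 * lam * sk s k.
Hypothesis aa_ge0 : forall k, 0 <= aa k.
Definition one : nat -> R := fun _ => 1.

Lemma rec1_ge0 k : 0 <= recf aa one k.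
Proof. elim: k => [|k IH] //=; rewrite /one; apply: addr_ge0 => //; exact: mulr_ge0. Qed.

Lemma rec1_ge1 k : 1 <= recf aa one k.+1.
Proof. rewrite /= /one lerDr; apply: mulr_ge0 => //; exact: rec1_ge0. Qed.

Lemma rec1_neq0 k : recf aa one k.+1 != 0.
Proof. by rewrite gt_eqF // (lt_le_trans ltr01) // rec1_ge1. Qed.

Variable Q : nat -> R.
Definition rho := recf aa Q n.+1 / recf aa one n.+1.
Definition W k := - recf aa Q k + rho * recf aa one k.
Definition zsol : 'cV[R]_n := \col_(i < n) W i.+1.

Lemma W_S k : W k.+1 = aa k * W k - Q k + rho.
Proof. rewrite /W /= /one; ring. Qed.

Lemma Zx_zsol k : (k <= n.+1)%N -> Zx zsol k = W k.
Proof.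
case: k => [|k] hk; first by rewrite /W /=; ring.
case: (ltnP k n) => h.
  have := sk_ord zsol (Ordinal h); rewrite /= => ->; by rewrite mxE.
have -> : k = n by apply/eqP; rewrite eqn_leq h -ltnS hk.
rewrite /= sk_out // /W /rho -mulrA mulVf ?rec1_neq0 //; ring.
Qed.

Lemma Jac_zsol (i : 'I_n) : (Jac lam s *m zsol) i 0 = Q i - Q i.+1.
Proof.
rewrite Jac_row !Zx_zsol ?ltnS ?(ltnW (ltn_ord i)) ?ltn_ord //.
rewrite (W_S i.+1) (W_S i) /aa; first ring.
have := ltn_ord i; lia.
Qed.
End Solve.
Arguments aa lam {n}. Arguments zsol lam {n}. Arguments W lam {n}. Arguments rho lam {n}.

Lemma Jac_unit lam n (s : 'cV[R]_n) : (forall k, 0 <= aa lam s k) -> Jac lam s \in unitmx.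
Proof.
move=> ha.
pose Qj (j : 'I_n) (k : nat) : R := if (j < k)%N then -1 else 0.
pose B : 'M[R]_n := \matrix_(i, j) zsol lam s (Qj j) i 0.
suff /mulmx1_unit [] : Jac lam s *m B = 1%:M by [].
apply/matrixP => i j.
have := Jac_zsol _ _ _ ha (Qj j) i.
rewrite !mxE => E.
have -> : ((i == j)%:R : R) = Qj j i - Qj j i.+1.
  rewrite /Qj -val_eqE /=; case: (ltngtP i j) => h.
  - have -> : (j < i.+1)%N = false by lia.
    by rewrite subrr.
  - have -> : (j < i.+1)%N = true by lia.
    by rewrite subrr.
  - by rewrite h ltnSn /= sub0r opprK.
rewrite -E; apply: eq_bigr => k _; congr (_ * _); rewrite /B mxE //.
Qed.

Lemma dotv_mx n (u v : 'cV[R]_n) : dotv u v = (u^T *m v) 0 0.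
Proof. by rewrite mxE; apply: eq_bigr => i _; rewrite mxE. Qed.

Lemma dot_inv n (J : 'M[R]_n) (x z : 'cV[R]_n) : J \in unitmx ->
  dotv (invmx J^T *m x) (J *m z) = dotv x z.
Proof.
move=> hJ; rewrite !dotv_mx trmx_mul trmx_inv trmxK -!mulmxA (mulmxA (invmx J) J).
by rewrite mulVmx // mul1mx.
Qed.

Section Bounds.
Variables (a q : nat -> R).
Hypothesis ha : forall k, 0 <= a k.
Hypothesis hq : forall k, 0 <= q k.
Definition FF k := \prod_(j < k) Num.max 1 (a j).
Definition sq k := \sum_(j < k) q j.

Lemma FF_S k : FF k.+1 = FF k * Num.max 1 (a k).
Proof. by rewrite /FF big_ord_recr. Qed.
Lemma sq_S k : sq k.+1 = sq k + q k.
Proof. by rewrite /sq big_ord_recr. Qed.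

Lemma max1_ge1 k : 1 <= Num.max 1 (a k). Proof. by rewrite le_max lexx. Qed.
Lemma max1_gea k : a k <= Num.max 1 (a k). Proof. by rewrite le_max lexx orbT. Qed.

Lemma FF_ge1 k : 1 <= FF k.
Proof.
elim: k => [|k IH]; first by rewrite /FF big_ord0.
rewrite FF_S; have := max1_ge1 k; nra.
Qed.

Lemma FF_mono k m : (k <= m)%N -> FF k <= FF m.
Proof.
move=> /subnK <-; elim: (m - k)%N => [|d IH] //.
rewrite addSn FF_S; have := max1_ge1 (d + k)%N; have := FF_ge1 (d + k)%N; nra.
Qed.

Lemma sq_ge0 k : 0 <= sq k.
Proof. by apply: sumr_ge0 => i _. Qed.

Lemma sq_mono k m : (k <= m)%N -> sq k <= sq m.
Proof.
move=> /subnK <-; elim: (m - k)%N => [|d IH] //.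
rewrite addSn sq_S; have := hq (d + k)%N; lra.
Qed.

Lemma recq_ge0 k : 0 <= recf a q k.
Proof. elim: k => [|k IH] //=; apply: addr_ge0 => //; exact: mulr_ge0. Qed.

Lemma rec1_ge0' k : 0 <= recf a one k.
Proof. elim: k => [|k IH] //=; rewrite /one; apply: addr_ge0 => //; exact: mulr_ge0. Qed.

Lemma rec1_le k : recf a one k <= k%:R * FF k.
Proof.
elim: k => [|k IH] /=; first by rewrite mul0r.
rewrite FF_S /one -addn1 natrD.
have := max1_ge1 k; have := max1_gea k; have := ha k; have := rec1_ge0' k; have := FF_ge1 k.
have : 0 <= k%:R :> R by [].
nra.
Qed.

Lemma recq_leF k : recf a q k <= FF k * sq k.
Proof.
elim: k => [|k IH] /=; first by rewrite /sq big_ord0 mulr0.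
rewrite FF_S sq_S.
set m := Num.max 1 (a k).
have m1 : 1 <= m := max1_ge1 k.
have F1 := FF_ge1 k.
have h1 : a k * recf a q k <= m * recf a q k by apply: ler_wpM2r; [exact: recq_ge0| exact: max1_gea].
have h2 : m * recf a q k <= m * (FF k * sq k) by apply: ler_wpM2l => //; lra.
have h3 : q k <= (FF k * m) * q k.
  apply: ler_peMl; [exact: hq| ]. rewrite -[1]mulr1; apply: ler_pM => //; lra.
have -> : FF k * m * (sq k + q k) = m * (FF k * sq k) + FF k * m * q k by ring.
lra.
Qed.

Lemma recq_le1 k : recf a q k <= recf a one k * sq k.
Proof.
elim: k => [|k IH] /=; first by rewrite mul0r.
rewrite sq_S /one.
have h1 : a k * recf a q k <= a k * (recf a one k * sq k) by apply: ler_wpM2l.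
have h2 : 0 <= a k * recf a one k * q k by apply: mulr_ge0; [apply: mulr_ge0 => //; exact: rec1_ge0'|].
have := sq_ge0 k.
have -> : (a k * recf a one k + 1) * (sq k + q k) = a k * (recf a one k * sq k) + a k * recf a one k * q k + sq k + q k by ring.
lra.
Qed.

End Bounds.


Lemma W_bound lam n (s : 'cV[R]_n) (q : nat -> R) k :
  (forall k, 0 <= aa lam s k) -> (forall k, 0 <= q k) -> (k <= n.+1)%N ->
  `| W lam s q k | <= (n.+2)%:R * FF (aa lam s) n.+1 * sq q n.+1.
Proof.
move=> ha hq hk.
set a := aa lam s.
have r1p : 0 < recf a one n.+1 by exact: lt_le_trans ltr01 (rec1_ge1 _ _ _ ha n).
have rho0 : 0 <= rho lam s q.
  rewrite /rho; apply: divr_ge0; [exact: (recq_ge0 _ _ ha hq n.+1) | exact: ltW].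
have rhoS : rho lam s q <= sq q n.+1.
  rewrite /rho ler_pdivrMr // mulrC; exact: recq_le1 _ _ ha hq n.+1.
have e1 := recq_leF _ _ ha hq k.
have e2 := rec1_le _ ha k.
have e3 := FF_mono a _ _ hk.
have e4 := sq_mono _ hq _ _ hk.
have F1 := FF_ge1 a k.
have s0 := sq_ge0 _ hq k.
have rq0 := recq_ge0 _ _ ha hq k.
have r10 := rec1_ge0' _ ha k.
have hk' : (k%:R : R) <= n.+1%:R by rewrite ler_nat.
have k0 : (0 : R) <= k%:R by [].
rewrite /W.
apply: (le_trans (ler_normD _ _)).
rewrite normrN !ger0_norm //; last by apply: mulr_ge0.
have b1 : recf a q k <= FF a n.+1 * sq q n.+1.
  apply: (le_trans e1); apply: ler_pM => //; lra.
have b2 : rho lam s q * recf a one k <= sq q n.+1 * (n.+1%:R * FF a n.+1).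
  apply: ler_pM => //; apply: (le_trans e2); apply: ler_pM => //; lra.
have -> : (n.+2%:R : R) = n.+1%:R + 1 by rewrite -natr1.
have -> : (n.+1%:R + 1) * FF a n.+1 * sq q n.+1 = FF a n.+1 * sq q n.+1 + sq q n.+1 * (n.+1%:R * FF a n.+1) by ring.
lra.
Qed.


Lemma hess_row lam n (x : 'cV[R]_n) (i : 'I_n) :
  hessq lam x i 0 = 2*lam*(Zx x i)^+2 - 2*lam*(Zx x i.+1)^+2.
Proof.
rewrite mxE mxE.
have E1 : forall k : 'I_n, (\sum_j (x^T) 0 j * hessf lam i j k) = x k 0 * hessf lam i k k.
  move=> k; rewrite (bigD1 k) //= big1 ?addr0; first by rewrite !mxE eqxx.
  by move=> j hj; rewrite !mxE (negbTE hj) mulr0.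
under eq_bigr do rewrite mxE E1.
have E2 : forall k : 'I_n, x k 0 * hessf lam i k k * x k 0 =
   (if (k:nat) == i then -2*lam*(sk x k.+1)^+2 else 0)
 + (if (k:nat) == i.-1 then (if (0 < i)%N then 2*lam*(sk x k.+1)^+2 else 0) else 0).
  move=> k; rewrite /hessf mxE eqxx sk_ord -val_eqE /=.
  case: (boolP (val k == val i)) => h1.
    case: (boolP (val k == (val i).-1)) => h4; last by rewrite addr0; ring.
    have -> : (0 < val i)%N = false by lia.
    by rewrite addr0; ring.
  case: (boolP ((val k).+1 == val i)) => h2.
    have -> : (val k == (val i).-1) = true by lia.
    have -> : (0 < val i)%N = true by lia.
    by rewrite add0r; ring.
  case: (boolP (val k == (val i).-1)) => h3 /=; last by rewrite mulr0 mul0r addr0.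
  have -> : (0 < val i)%N = false by lia.
  by rewrite mulr0 mul0r addr0.
rewrite (eq_bigr _ (fun k _ => E2 k)) big_split /=.
rewrite (sum_ind n i (fun k => -2*lam*(sk x k.+1)^+2)).
rewrite (sum_ind n i.-1 (fun k => if (0 < i)%N then 2*lam*(sk x k.+1)^+2 else 0)).
rewrite ltn_ord /=.
have hi := ltn_ord i.
move: hi; case: (nat_of_ord i) => [|i'] /= hi; rewrite ?(ltnW hi) /=.
  by rewrite if_same; ring.
ring.
Qed.

Lemma sk0 n (s : 'cV[R]_n) : sk s 0 = 1.
Proof. by rewrite /sk. Qed.

Lemma sk_ge0 n (s : 'cV[R]_n) : inS s -> forall k, 0 <= sk s k.
Proof.
move=> [h1 _] [|k]; first by rewrite sk0.
case: (ltnP k n) => h; last by rewrite sk_out.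
have := sk_ord s (Ordinal h); rewrite /= => ->; exact: (h1 _).1.
Qed.

Lemma equil_step lam n (s : 'cV[R]_n) : 0 <= lam -> inS s -> fvec lam s = 0 ->
  forall k, sk s k.+1 <= lam * sk s k ^+ 2.
Proof.
move=> hl hs hf.
pose g k := lam * sk s k ^+ 2 - sk s k.+1.
have hg : forall i, (i < n)%N -> g i = g i.+1.
  move=> i h; have := congr1 (fun M : 'cV[R]_n => M (Ordinal h) 0) hf; rewrite !mxE /= => e.
  have : g i - g i.+1 = 0 by rewrite -e /g; ring.
  by move/eqP; rewrite subr_eq0 => /eqP.
have gn : forall d, (d <= n)%N -> g (n - d)%N = g n.
  elim=> [|d IH] hd; first by rewrite subn0.
  rewrite hg; last by lia.
  by rewrite subnSK // IH // ltnW.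
have gn0 : 0 <= g n.
  rewrite /g sk_out // subr0; apply: mulr_ge0 => //; exact: sqr_ge0.
move=> k; case: (leqP k n) => hk.
  have := gn (n - k)%N (leq_subr _ _); rewrite subKn // => e.
  have : 0 <= g k by rewrite e.
  rewrite /g; lra.
rewrite sk_out ?(ltnW hk) //; apply: mulr_ge0 => //; exact: sqr_ge0.
Qed.

Lemma equil_pow lam n (s : 'cV[R]_n) : 0 <= lam -> inS s -> fvec lam s = 0 ->
  forall k, lam * sk s k <= lam ^+ (2 ^ k).
Proof.
move=> hl hs hf; elim=> [|k IH]; first by rewrite sk0 mulr1 expn0 expr1.
have h0 : 0 <= lam * sk s k by apply: mulr_ge0 => //; exact: sk_ge0 _ _ hs k.
apply: (le_trans (ler_wpM2l hl (equil_step _ _ _ hl hs hf k))).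
rewrite expnSr exprM expr2.
have -> : lam * (lam * sk s k ^+ 2) = (lam * sk s k) * (lam * sk s k) by ring.
by apply: ler_pM.
Qed.

Lemma bern (d : R) m : 0 <= d -> d <= 1 -> (1 - d) ^+ m * (1 + m%:R * d) <= 1.
Proof.
move=> d0 d1; elim: m => [|m IH]; first by rewrite expr0 mul0r addr0 mulr1.
have P0 : 0 <= (1 - d) ^+ m by apply: exprn_ge0; lra.
have h : (1 - d) * (1 + m.+1%:R * d) <= 1 + m%:R * d.
  rewrite -natr1; have : 0 <= m%:R :> R by []. nra.
have -> : (1 - d) ^+ m.+1 * (1 + m.+1%:R * d) = (1 - d) ^+ m * ((1 - d) * (1 + m.+1%:R * d)) by rewrite exprS; ring.
apply: (le_trans _ IH); exact: ler_wpM2l.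
Qed.

Lemma FF_bound lam n (s : 'cV[R]_n) d : 0 < d -> d <= 1 -> lam = 1 - d ->
  inS s -> fvec lam s = 0 ->
  forall k, FF (aa lam s) k <= 2 ^+ k /\ FF (aa lam s) k <= 2 / d.
Proof.
move=> d0 d1 hl hs hf.
have l0 : 0 <= lam by lra.
have l1 : lam <= 1 by lra.
have ha : forall k, aa lam s k <= 2 * lam ^+ (2 ^ k).
  move=> k; rewrite /aa -mulrA; apply: ler_wpM2l => //; exact: equil_pow.
have hP : forall k, 0 <= lam ^+ (2 ^ k) by move=> k; exact: exprn_ge0.
elim=> [|k IH].
  rewrite /FF big_ord0 expr0; split => //.
  by rewrite ler_pdivlMr // mul1r; lra.
case: IH => IH1 IH2.
have F1 := FF_ge1 (aa lam s) k.
rewrite FF_S.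
case: (lerP 1 ((2 ^ k)%:R * d)) => hk.
  have hb := bern d (2 ^ k) (ltW d0) d1; rewrite -hl in hb.
  have hak : aa lam s k <= 1.
    apply: (le_trans (ha k)); apply: le_trans hb.
    have := hP k; nra.
  rewrite max_l // mulr1; split => //.
  apply: (le_trans IH1); rewrite exprS; have : 0 <= (2 : R) ^+ k by apply: exprn_ge0.
  lra.
have hm : Num.max 1 (aa lam s k) <= 2.
  rewrite ge_max; apply/andP; split; first lra.
  apply: (le_trans (ha k)); have := exprn_ile1 (2 ^ k) l0 l1; lra.
have hm1 := max1_ge1 (aa lam s) k.
have e1 : FF (aa lam s) k * Num.max 1 (aa lam s k) <= 2 ^+ k * 2.
  by apply: ler_pM => //; lra.
split; first by rewrite exprSr.
apply: (le_trans e1); rewrite ler_pdivlMr //; move: hk; rewrite natrX => hk.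
nra.
Qed.

Lemma dotv_ge0 n (x : 'cV[R]_n) : 0 <= dotv x x.
Proof. by apply: sumr_ge0 => i _; rewrite -expr2 sqr_ge0. Qed.

Lemma enorm_sq n (x : 'cV[R]_n) : enorm x ^+ 2 = dotv x x.
Proof. by rewrite /enorm sqr_sqrtr // dotv_ge0. Qed.

Lemma coord_le n (x : 'cV[R]_n) (i : 'I_n) : `|x i 0| <= enorm x.
Proof.
rewrite -sqrtr_sqr /enorm ler_sqrt ?dotv_ge0 //.
rewrite /dotv (bigD1 i) //= -expr2 lerDl.
by apply: sumr_ge0 => j _; rewrite -expr2 sqr_ge0.
Qed.

Lemma core lam n (s x : 'cV[R]_n) d : 0 < d -> d <= 1 -> lam = 1 - d ->
  inS s -> fvec lam s = 0 ->
  `| dotv (invmx (Jac lam s)^T *m x) (hessq lam x) |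
     <= n%:R * n.+2%:R * (2 / d) * 2 * enorm x ^+ 3.
Proof.
move=> d0 d1 hl hs hf.
have l0 : 0 <= lam by lra.
have l1 : lam <= 1 by lra.
have ha : forall k, 0 <= aa lam s k.
  by move=> k; rewrite /aa; apply: mulr_ge0; [apply: mulr_ge0|exact: sk_ge0].
have hJ := Jac_unit _ _ _ ha.
pose q k := 2 * lam * (Zx x k) ^+ 2.
have hq : forall k, 0 <= q k by move=> k; apply: mulr_ge0; [apply: mulr_ge0|exact: sqr_ge0].
have eh : hessq lam x = Jac lam s *m zsol lam s q.
  apply/matrixP => i j; rewrite (ord1 j) hess_row Jac_zsol //.
rewrite eh dot_inv //.
have sqe : sq q n.+1 = 2 * lam * dotv x x.
  rewrite /sq big_ord_recl /q /= expr0n /= mulr0 add0r /dotv mulr_sumr.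
  apply: eq_bigr => i _; rewrite /bump /= add1n sk_ord; ring.
have Fb := (FF_bound _ _ _ _ d0 d1 hl hs hf n.+1).2.
have nx0 : 0 <= enorm x by rewrite /enorm sqrtr_ge0.
have hz : forall i : 'I_n, `| zsol lam s q i 0 | <= n.+2%:R * (2 / d) * (2 * enorm x ^+ 2).
  move=> i; rewrite mxE.
  apply: (le_trans (@W_bound lam n s q i.+1 ha hq _)); first by have := ltn_ord i; lia.
  rewrite sqe enorm_sq.
  have dx := dotv_ge0 _ x.
  have F0 : 0 <= FF (aa lam s) n.+1 by apply: le_trans (FF_ge1 _ _).
  apply: ler_pM; [apply: mulr_ge0 => //| apply: mulr_ge0; [apply: mulr_ge0|] => // |apply: ler_wpM2l => //| nra].
rewrite /dotv; apply: (le_trans (ler_norm_sum _ _ _)).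
apply: (le_trans (y := \sum_(i < n) enorm x * (n.+2%:R * (2 / d) * (2 * enorm x ^+ 2)))).
  apply: ler_sum => i _; rewrite normrM; apply: ler_pM => //; exact: coord_le.
rewrite sumr_const card_ord -mulr_natl.
rewrite le_eqVlt; apply/orP; left; apply/eqP; ring.
Qed.

Lemma powRD' (x a b : R) : 0 < x -> x `^ (a + b) = x `^ a * x `^ b.
Proof. by move=> h; apply: powRD; apply/implyP => _; rewrite gt_eqF. Qed.

Lemma powR_nat' (x y : R) m : 0 < x -> (x `^ y) ^+ m = x `^ (y * m%:R).
Proof. by move=> h; rewrite powRrM powR_mulrn // powR_ge0. Qed.

End Aux.

Theorem lemma9 (R : realType) (gamma alpha eps xi : R) (r : nat)
  (b : nat -> nat)
  (hgamma : 0 < gamma <= 1) (halpha : 0 < alpha < 1 / 4)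
  (hr : (0 < r)%N) (heps : 0 < eps) (hxi : 0 < xi)
  (hb1 : forall N : nat, (1 <= b N)%N)
  (hblog : exists (K : R) (N1 : nat), forall N : nat, (N1 <= N)%N ->
             (b N)%:R <= K * ln (N%:R : R)) :
  exists (C : R) (N0 : nat), 0 < C /\
    forall N : nat, (1 <= N)%N -> (N0 <= N)%N ->
    let lam : R := 1 - gamma / (N%:R `^ alpha) in
    forall sstar s : 'cV[R]_(b N),
      inS sstar -> fvec lam sstar = 0 ->
      inS s ->
      enorm (s - sstar) ^+ (2 * r) <= N%:R `^ (- eps) ->
      `| dotv (invmx ((Jac lam sstar)^T) *m (s - sstar))
              (hessq lam (s - sstar)) |
        <= C / (N%:R `^ (3 * eps / (2 * r%:R) - 2 * alpha - 3 * xi)).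
Proof.
case: hblog => K [N1 hK].
case/andP: hgamma => g0 g1; case/andP: halpha => a0 a1.
pose X : R := 12 * (`|K| / xi) ^+ 2 / gamma.
have X0 : 0 <= X by rewrite /X; apply: divr_ge0; [apply: mulr_ge0 => //; exact: sqr_ge0| exact: ltW].
exists (X + 1), N1; split; first lra.
move=> N hN1 hN0 lam sstar s hss hf hs hn.
set Nr : R := N%:R.
have Nr1 : 1 <= Nr by rewrite /Nr ler1n.
have Nr0 : 0 < Nr by lra.
have PA : 1 <= Nr `^ alpha by rewrite -(powRr0 Nr); apply: ler_powR => //; exact: ltW.
set d := gamma / Nr `^ alpha.
have d0 : 0 < d by apply: divr_gt0 => //; lra.
have d1 : d <= 1 by rewrite /d ler_pdivrMr ?mul1r; lra.
have hc := @core R lam _ sstar (s - sstar) d d0 d1 (erefl _) hss hf.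
set n := b N in hc *.
set t := enorm (s - sstar) in hc hn *.
have t0 : 0 <= t by rewrite /t /enorm sqrtr_ge0.
set u := Nr `^ (- eps / (2 * r%:R)).
have u0 : 0 <= u by exact: powR_ge0.
have r0 : (0 : R) < r%:R by rewrite ltr0n.
have hu : u ^+ (2 * r) = Nr `^ (- eps).
  rewrite powR_nat' // natrM; congr (_ `^ _); field; lra.
have tu : t <= u.
  rewrite -(ler_pXn2r (n := (2 * r)%N)) ?muln_gt0 //; by rewrite hu.
have ht : t ^+ 3 <= Nr `^ (- (3 * eps / (2 * r%:R))).
  apply: (le_trans (y := u ^+ 3)); first by rewrite ler_pXn2r.
  rewrite powR_nat' // (_ : - eps / (2 * r%:R) * 3%:R = - (3 * eps / (2 * r%:R))) //.
  field; lra.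
have n1 : (1 : R) <= n%:R by rewrite ler1n hb1.
have lnN : ln Nr <= Nr `^ xi / xi.
  rewrite ler_pdivlMr // mulrC -ln_powR.
  have Px : 0 < Nr `^ xi by exact: powR_gt0.
  have h : ln (Nr `^ xi) <= Nr `^ xi - 1.
    have := @le_ln1Dx _ (Nr `^ xi - 1); rewrite (addrC 1) subrK; apply; lra.
  lra.
have ln0 : 0 <= ln Nr by exact: ln_ge0.
have hn' : n%:R <= `|K| / xi * Nr `^ xi.
  apply: (le_trans (hK N hN0)); apply: (le_trans (y := `|K| * ln Nr)).
    by apply: (ler_wpM2r ln0); exact: ler_norm.
  rewrite -mulrA (mulrC xi^-1); have := normr_ge0 K; nra.
have L0 : 0 <= `|K| / xi * Nr `^ xi by lra.
have hA : n%:R * n.+2%:R <= 3 * ((`|K| / xi) ^+ 2 * (Nr `^ xi * Nr `^ xi)).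
  have -> : n.+2%:R = n%:R + 2 :> R by rewrite -addn2 natrD.
  have : n%:R * n%:R <= (`|K| / xi * Nr `^ xi) * (`|K| / xi * Nr `^ xi) by apply: ler_pM => //; lra.
  rewrite expr2; nra.
have e2d : 2 / d = 2 * Nr `^ alpha / gamma by rewrite /d invf_div; field; lra.
set M := Nr `^ (- (3 * eps / (2 * r%:R))).
have M0 : 0 <= M by exact: powR_ge0.
have PX0 : 0 <= Nr `^ xi by exact: powR_ge0.
have PA0 : 0 <= Nr `^ alpha by lra.
have hR : (X + 1) / Nr `^ (3 * eps / (2 * r%:R) - 2 * alpha - 3 * xi)
   = (X + 1) * (Nr `^ alpha * (Nr `^ xi * Nr `^ xi) * M) * Nr `^ (alpha + xi).
  have hE : Nr `^ (- (3 * eps / (2 * r%:R) - 2 * alpha - 3 * xi)) = Nr `^ alpha * (Nr `^ xi * Nr `^ xi) * M * Nr `^ (alpha + xi).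
    rewrite /M -!powRD' //; congr (_ `^ _); ring.
  rewrite -powRN hE; ring.
rewrite hR.
apply: (le_trans hc).
have PAX : 1 <= Nr `^ (alpha + xi) by rewrite -(powRr0 Nr); apply: ler_powR => //; lra.
set Y := Nr `^ alpha * (Nr `^ xi * Nr `^ xi) * M.
have Y0 : 0 <= Y by rewrite /Y; apply: mulr_ge0 => //; apply: mulr_ge0 => //; apply: mulr_ge0.
have step1 : n%:R * n.+2%:R * (2 / d) * 2 * t ^+ 3 <= (3 * ((`|K| / xi) ^+ 2 * (Nr `^ xi * Nr `^ xi))) * (2 / d) * 2 * M.
  have d2 : 0 <= 2 / d by apply: divr_ge0 => //; lra.
  apply: ler_pM => //; first by apply: mulr_ge0 => //; apply: mulr_ge0 => //.
    by apply: exprn_ge0.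
  apply: ler_pM => //; first by apply: mulr_ge0 => //.
  by apply: ler_pM.
apply: (le_trans step1).
have -> : 3 * ((`|K| / xi) ^+ 2 * (Nr `^ xi * Nr `^ xi)) * (2 / d) * 2 * M = X * Y.
  rewrite e2d /X /Y; field; lra.
have : X * Y <= (X + 1) * Y by nra.
have : (X + 1) * Y <= (X + 1) * Y * Nr `^ (alpha + xi).
  rewrite -{1}[(X + 1) * Y]mulr1; apply: ler_wpM2l => //; apply: mulr_ge0 => //; lra.
lra.
Qed.
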